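(* For even $m\ge 18$, let $G^{\mathrm{mix}}_m$ be the graph with vertex set $\{u^*\}\cup\{a\}\cup B\cup\{z,x,y\}\cup L$, where $\{a\}\cup B$ with $|B|=3$ induces a $K_4$, $|L|=m-14$, $u^*$ is adjacent to every vertex of $\{a\}\cup B\cup\{z\}\cup L$, and the remaining edges are exactly $ax$, $xy$, $yz$ (so $G^{\mathrm{mix}}_m$ has $m$ edges). Its spectral radius equals the largest root of \[ f_{\mathrm{mix}}(x)=x^7-2x^6+(3-m)x^5+(2m-24)x^4+(6m-61)x^3+(84-6m)x^2+(90-7m)x+2m-28, \] and $\rho(G^{\mathrm{mix}}_m)<\rho'(m)$.
   Context: $\rho(G)$ denotes the adjacency spectral radius. For even $m$, $\rho'(m)$ is the largest real root of $p_m(x)=x^4-mx^2-(m-2)x+\frac{m}{2}-1$. *)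

(* Defs.v *)
From HB Require Import structures.
From mathcomp Require Import all_boot all_order all_algebra.
Set Implicit Arguments. Unset Strict Implicit. Unset Printing Implicit Defensive.
Import Order.TTheory GRing.Theory Num.Theory.
Local Open Scope ring_scope.

Definition is_spectral_radius (R : realFieldType) (n : nat) (A : 'M[R]_n) (r : R) : Prop :=
  (exists2 l, eigenvalue A l & `|l| = r) /\ (forall l, eigenvalue A l -> `|l| <= r).

Definition is_largest_root (R : realFieldType) (p : {poly R}) (r : R) : Prop :=
  root p r /\ (forall x, root p x -> x <= r).

(* Vertex encoding of G^mix_m on {0, ..., m-7} (m-6 vertices):
   0 = u*, 1 = a, 2,3,4 = B, 5 = z, 6 = x, 7 = y, 8..m-7 = L (m-14 vertices). *)
Definition mix_edge0 (i j : nat) : bool :=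
  [|| (i == 0%N) && ((1 <= j <= 5)%N || (8 <= j)%N),
      [&& (1 <= i <= 4)%N, (1 <= j <= 4)%N & (i < j)%N],
      (i == 1%N) && (j == 6%N),
      (i == 6%N) && (j == 7%N)
    | (i == 5%N) && (j == 7%N)].

Definition mix_adj (i j : nat) : bool := mix_edge0 i j || mix_edge0 j i.

Definition Gmix_adjmx (R : nzRingType) (m : nat) : 'M[R]_(m - 6) :=
  \matrix_(i, j) (mix_adj i j)%:R.

Definition f_mix (R : nzRingType) (m : nat) : {poly R} :=
  'X^7 - 2%:P * 'X^6 + (3 - m%:R)%:P * 'X^5 + (2 * m%:R - 24)%:P * 'X^4
  + (6 * m%:R - 61)%:P * 'X^3 + (84 - 6 * m%:R)%:P * 'X^2
  + (90 - 7 * m%:R)%:P * 'X + (2 * m%:R - 28)%:P.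

Definition p_rho' (R : fieldType) (m : nat) : {poly R} :=
  'X^4 - (m%:R)%:P * 'X^2 - (m%:R - 2)%:P * 'X + (m%:R / 2 - 1)%:P.

(* Main.v *)
Require Import Defs.
From HB Require Import structures.
From mathcomp Require Import all_boot all_order all_algebra.
From mathcomp Require Import ring lra zify.
Import Order.TTheory GRing.Theory Num.Theory.
Set Implicit Arguments. Unset Strict Implicit.
Local Open Scope ring_scope.

Section S1.
Variable R : rcfType.
Definition fR (M x : R) : R :=
  x^+7 - 2 * x^+6 + (3 - M) * x^+5 + (2 * M - 24) * x^+4
  + (6 * M - 61) * x^+3 + (84 - 6 * M) * x^+2 + (90 - 7 * M) * x + (2 * M - 28).
Definition pR (M x : R) : R := x^+4 - M * x^+2 - (M - 2) * x + (M / 2 - 1).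

Lemma horner_f m x : (f_mix R m).[x] = fR m%:R x.
Proof. rewrite /f_mix /fR !hornerE. ring. Qed.
Lemma horner_p m x : (p_rho' R m).[x] = pR m%:R x.
Proof. rewrite /p_rho' /pR !hornerE. ring. Qed.

Lemma fhi_pos (s : R) : 21/5 <= s -> 0 < fR (s^+2) (s + 1/4).
Proof.
move=> hs. set t := s - 21/5. have ht : 0 <= t by rewrite /t subr_ge0.
have -> : s = t + 21/5 by rewrite /t; ring.
rewrite /fR.
have h2 : 0 <= t^+2 by apply: exprn_ge0.
have h3 : 0 <= t^+3 by apply: exprn_ge0.
have h4 : 0 <= t^+4 by apply: exprn_ge0.
have h5 : 0 <= t^+5 by apply: exprn_ge0.
have h6 : 0 <= t^+6 by apply: exprn_ge0.
have h7 : 0 <= t^+7 by apply: exprn_ge0.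
lra.
Qed.

Lemma flo_neg (s : R) : 21/5 <= s -> fR (s^+2) (s - 1/2) < 0.
Proof.
move=> hs. set t := s - 21/5. have ht : 0 <= t by rewrite /t subr_ge0.
have -> : s = t + 21/5 by rewrite /t; ring.
rewrite /fR.
have h2 : 0 <= t^+2 by apply: exprn_ge0.
have h3 : 0 <= t^+3 by apply: exprn_ge0.
have h4 : 0 <= t^+4 by apply: exprn_ge0.
have h5 : 0 <= t^+5 by apply: exprn_ge0.
have h6 : 0 <= t^+6 by apply: exprn_ge0.
have h7 : 0 <= t^+7 by apply: exprn_ge0.
have hh : 0 <= t^+2 * (t - 2/3)^+2 by rewrite mulr_ge0 // sqr_ge0.
lra.
Qed.

Lemma phi_neg (s : R) : 21/5 <= s -> pR (s^+2) (s + 1/4) < 0.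
Proof.
move=> hs. set t := s - 21/5. have ht : 0 <= t by rewrite /t subr_ge0.
have -> : s = t + 21/5 by rewrite /t; ring.
rewrite /pR.
have h2 : 0 <= t^+2 by apply: exprn_ge0.
have h3 : 0 <= t^+3 by apply: exprn_ge0.
have h4 : 0 <= t^+4 by apply: exprn_ge0.
lra.
Qed.

Lemma pM_pos (M : R) : 18 <= M -> 0 < pR M M.
Proof. move=> h. rewrite /pR. nra. Qed.

Lemma p_incr (M a b : R) : 18 <= M -> M <= a^+2 -> 4 <= a -> a < b -> pR M a < pR M b.
Proof.
move=> hM ha h4 hab. rewrite /pR -subr_gt0.
have -> : b ^+ 4 - M * b ^+ 2 - (M - 2) * b + (M / 2 - 1) -
  (a ^+ 4 - M * a ^+ 2 - (M - 2) * a + (M / 2 - 1)) =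
  (b - a) * (b^+3 + b^+2 * a + b * a^+2 + a^+3 - M * (a + b) - (M - 2)) by ring.
apply: mulr_gt0; first by rewrite subr_gt0.
have hb2 : a^+2 <= b^+2 by nra.
nra.
Qed.

End S1.
Section S2.
Variable R : rcfType.
Variables (cu ca cb cz cx cy cw : R).
Definition vf (i : nat) : R :=
  if i == 0%N then cu else if i == 1%N then ca else if (i <= 4)%N then cb
  else if i == 5%N then cz else if i == 6%N then cx else if i == 7%N then cy else cw.
Definition NS (k j : nat) : R :=
  if j == 0%N then ca + 3 * cb + cz + k%:R * cw
  else if j == 1%N then cu + 3 * cb + cx
  else if (j <= 4)%N then cu + ca + 2 * cb
  else if j == 5%N then cu + cy
  else if j == 6%N then ca + cy
  else if j == 7%N then cx + cz else cu.

Lemma sum_adj (n : nat) (j : nat) : (8 <= n)%N -> (j < n)%N ->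
  \sum_(i < n) vf i * (mix_adj i j)%:R = NS (n - 8) j.
Proof.
move=> hn hj.
rewrite -(big_mkord xpredT (fun i => vf i * (mix_adj i j)%:R)).
rewrite (big_cat_nat _ (n:=8)) //=.
rewrite [X in _ + X](eq_big_nat _ _ (F2 := fun _ => if j == 0%N then cw else 0)); last first.
  move=> i /andP[hi _].
  case: i hi => [|[|[|[|[|[|[|[|i]]]]]]]] // _.
  rewrite /vf /mix_adj /mix_edge0 /=.
  case: j hj => [|[|[|[|[|[|[|[|j]]]]]]]] _ /=; rewrite ?mulr1 ?mulr0 //.
rewrite sumr_const_nat.
rewrite !big_nat_recl // big_geq //.
rewrite /vf /NS /mix_adj /mix_edge0 /=.
case: j hj => [|[|[|[|[|[|[|[|j]]]]]]]] _ /=; rewrite ?mulr1 ?mulr0 ?mul0r ?addr0 ?add0r; 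
  rewrite ?mulr_natl; ring.
Qed.

End S2.
Section S3.
Variable R : rcfType.
Definition Up (l : R) := l^+5 - 2* l^+4 - 6* l^+3 + 6* l^+2 + 7* l - 2.
Definition Ap (l : R) := l^+4 + l^+3 - 2* l^+2 - l - 2.
Definition Bp (l : R) := l^+4 + l^+3 - 3* l^+2 - 2* l + 2.
Definition Xp (l : R) := l^+3 + 2* l^+2 - 3* l - 4.
Definition Yp (l : R) := l^+3 - l^+2 - 3* l + 2.
Definition Zp (l : R) := l^+4 - 2* l^+3 - 5* l^+2 + 5* l + 4.

Definition vl (l : R) := vf (l * Up l) (l * Ap l) (l * Bp l) (l * Zp l) (l * Xp l) (l * Yp l) (Up l).

Lemma eig_row (m : nat) (l : R) : (18 <= m)%N -> fR m%:R l = 0 ->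
  forall j, (j < m - 6)%N -> \sum_(i < m - 6) vl l i * (mix_adj i j)%:R = l * vl l j.
Proof.
move=> hm hf j hj. rewrite /vl sum_adj; [|lia|exact: hj].
have hk : ((m - 6 - 8)%:R : R) = m%:R - 14.
  rewrite -subnDA natrB; last by lia.
  by [].
rewrite /NS /vf.
case: j hj => [|[|[|[|[|[|[|[|j]]]]]]]] _ /=.
- rewrite hk. apply/eqP; rewrite -subr_eq0; apply/eqP. rewrite -[RHS]oppr0 -hf /fR /Up /Ap /Bp /Zp. ring.
- rewrite /Up /Ap /Bp /Xp; ring.
- rewrite /Up /Ap /Bp; ring.
- rewrite /Up /Ap /Bp; ring.
- rewrite /Up /Ap /Bp; ring.
- rewrite /Up /Yp /Zp; ring.
- rewrite /Ap /Yp /Xp; ring.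
- rewrite /Xp /Zp /Yp; ring.
- ring.
Qed.

Lemma pos_all (l : R) : 37/10 <= l ->
  [/\ 0 < Up l, 0 < Ap l, 0 < Bp l, 0 < Xp l & [/\ 0 < Yp l, 0 < Zp l & 0 < l]].
Proof.
move=> hl. set t := l - 37/10. have ht : 0 <= t by rewrite /t subr_ge0.
have -> : l = t + 37/10 by rewrite /t; ring.
have h2 : 0 <= t^+2 by apply: exprn_ge0.
have h3 : 0 <= t^+3 by apply: exprn_ge0.
have h4 : 0 <= t^+4 by apply: exprn_ge0.
have h5 : 0 <= t^+5 by apply: exprn_ge0.
rewrite /Up /Ap /Bp /Xp /Yp /Zp.
split; try split; lra.
Qed.

Lemma vl_pos (l : R) i : 37/10 <= l -> 0 < vl l i.
Proof.
move=> /pos_all [hU hA hB hX [hY hZ hl]].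
rewrite /vl /vf.
by repeat case: ifP => _; rewrite ?mulr_gt0.
Qed.

Lemma vl_nz (m : nat) (x : R) : (18 <= m)%N -> \row_(i < m - 6) vl x i != 0.
Proof.
move=> hm; apply/negP => /eqP h0.
have e i (hi : (i < m - 6)%N) : vl x i = 0.
  by have := congr1 (fun M : 'rV[R]_(m - 6) => M 0 (Ordinal hi)) h0; rewrite !mxE.
have e8 := e 8%N ltac:(lia).
have e1 := e 1%N ltac:(lia).
have e2 := e 2%N ltac:(lia).
rewrite /vl /vf /= in e8 e1 e2. clear h0 e.
have [x0|xn0] := eqVneq x 0.
  by rewrite x0 /Up !expr0n /= in e8; lra.
move/eqP: e1; rewrite mulf_eq0 (negbTE xn0) /= => /eqP e1.
move/eqP: e2; rewrite mulf_eq0 (negbTE xn0) /= => /eqP e2.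
have hq : x^+2 + x - 4 = 0 by move: e1 e2; rewrite /Ap /Bp; lra.
have : Ap x = (x^+2 + 2) * (x^+2 + x - 4) + (6 - 3 * x) by rewrite /Ap; ring.
rewrite e1 hq mulr0 add0r => h6.
have x2 : x = 2 by lra.
by rewrite x2 in hq; lra.
Qed.

Lemma eigval_root (m : nat) (x : R) : (18 <= m)%N -> fR m%:R x = 0 ->
  eigenvalue (Gmix_adjmx R m) x.
Proof.
move=> hm hf; apply/eigenvalueP; exists (\row_(i < m - 6) vl x i); last exact: vl_nz.
apply/rowP => j; rewrite !mxE.
under eq_bigr do rewrite !mxE.
exact: eig_row.
Qed.
End S3.
Lemma perron (R : rcfType) (n : nat) (A : 'M[R]_n) (p : 'I_n -> R) (rho : R) :
  (forall i j, 0 <= A i j) -> (forall i j, A i j = A j i) -> (forall i, 0 < p i) ->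
  (forall i, \sum_j p j * A j i = rho * p i) ->
  forall l, eigenvalue A l -> `|l| <= rho.
Proof.
move=> Ag0 Asym pg0 peq l /eigenvalueP [v hv vnz].
have hj j : l * v 0 j = \sum_i v 0 i * A i j.
  by have := congr1 (fun M : 'rV[R]_n => M 0 j) hv; rewrite !mxE => <-.
have ineq j : `|l| * `|v 0 j| <= \sum_i `|v 0 i| * A i j.
  rewrite -normrM hj; apply: le_trans (ler_norm_sum _ _ _) _.
  by apply: ler_sum => i _; rewrite normrM (ger0_norm (Ag0 i j)).
set S := \sum_j `|v 0 j| * p j.
have S0 : 0 <= S by apply: sumr_ge0 => j _; rewrite mulr_ge0 // ltW.
have Spos : 0 < S.
  rewrite lt_def S0 andbT; apply/negP => /eqP hS.
  have hz := psumr_eq0P (fun j _ => mulr_ge0 (normr_ge0 (v 0 j)) (ltW (pg0 j))) hS.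
  move/negP: vnz; apply; apply/eqP/rowP => j; rewrite mxE.
  have := hz j isT; move/eqP; rewrite mulf_eq0 (gt_eqF (pg0 j)) orbF normr_eq0.
  by move/eqP.
have key : `|l| * S <= rho * S.
  rewrite /S mulr_sumr.
  apply: (@le_trans _ _ (\sum_j (\sum_i `|v 0 i| * A i j) * p j)).
    by apply: ler_sum => j _; rewrite mulrA ler_wpM2r // ltW.
  under eq_bigr do rewrite mulr_suml.
  rewrite exchange_big /= mulr_sumr.
  apply: ler_sum => i _.
  rewrite mulrCA -peq mulr_sumr.
  rewrite le_eqVlt; apply/orP; left; apply/eqP; apply: eq_bigr => j _.
  by rewrite Asym; ring.
by rewrite -(ler_pM2r Spos).
Qed.

Theorem proposition6p4 (R : rcfType) (m : nat) :
  ~~ odd m -> (18 <= m)%N ->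
  exists rho rho' : R,
    [/\ is_spectral_radius (Gmix_adjmx R m) rho,
        is_largest_root (f_mix R m) rho,
        is_largest_root (p_rho' R m) rho'
      & rho < rho'].
Proof.
move=> _ hm.
set M : R := m%:R.
have hM : 18 <= M by rewrite /M (ler_nat R 18 m).
set s := Num.sqrt M.
have hs2 : s^+2 = M by rewrite sqr_sqrtr // (le_trans _ hM).
have hs0 : 0 <= s := sqrtr_ge0 M.
have hs : 21/5 <= s by nra.
have hflo := flo_neg hs; rewrite hs2 in hflo.
have hfhi := fhi_pos hs; rewrite hs2 in hfhi.
have hphi := phi_neg hs; rewrite hs2 in hphi.
have [rho hrho_in hrho] : exists2 x, s - 1/2 <= x <= s + 1/4 & root (f_mix R m) x.
  apply: poly_ivt; first lra.
  by rewrite !horner_f -/M; apply/andP; split; apply: ltW.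
move/andP: hrho_in => [hlo hhi].
have hr37 : 37/10 <= rho by lra.
have hfr : fR M rho = 0 by move/eqP: hrho; rewrite horner_f.
have Pf : forall l, eigenvalue (Gmix_adjmx R m) l -> `|l| <= rho.
  apply: (@perron R (m - 6) (Gmix_adjmx R m) (fun i => vl rho i)).
  - by move=> i j; rewrite mxE ler0n.
  - by move=> i j; rewrite !mxE /mix_adj orbC.
  - by move=> i; apply: vl_pos.
  - move=> i. under eq_bigr do rewrite mxE. exact: eig_row.
have rho_pos : 0 < rho by lra.
have [r' hr'_in hr'] : exists2 x, s + 1/4 <= x <= M & root (p_rho' R m) x.
  apply: poly_ivt; first nra.
  rewrite !horner_p -/M; apply/andP; split; first exact: ltW.
  by apply: ltW; apply: pM_pos.
move/andP: hr'_in => [hr'lo hr'hi].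
have hpr : pR M r' = 0 by move/eqP: hr'; rewrite horner_p.
exists rho, r'; split.
- split; last exact: Pf.
  exists rho; last exact: gtr0_norm.
  exact: eigval_root.
- split; first exact: hrho.
  move=> x; rewrite /root horner_f -/M => /eqP hx.
  apply: le_trans (Pf x (eigval_root hm hx)).
  exact: ler_norm.
- split; first exact: hr'.
  move=> y; rewrite /root horner_p -/M => /eqP hy.
  have [//|hlt] := leP y r'.
  have := p_incr hM _ _ hlt.
  rewrite hpr hy ltxx; apply => //; nra.
- have hne : r' != s + 1/4 by apply/eqP => e; move: hphi; rewrite -e hpr ltxx.
  have : s + 1/4 < r' by rewrite lt_neqAle hr'lo andbT eq_sym.
  lra.
Qed.
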